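(* Let $\mathbf I_F$ be a weakly faithful generalized Fisher information and $\{\mathcal N^\theta_{A\to B}\}_\theta$ a family of quantum channels. Consider any $n$-round sequential strategy consisting of a $\theta$-independent input state $\rho_{R_1A_1}$ and $\theta$-independent channels $\mathcal S^i_{R_iB_i\to R_{i+1}A_{i+1}}$, $i=1,\dots,n-1$, and let $$\omega^\theta_{R_nB_n}:=(\mathcal N^\theta_{A_n\to B_n}\circ\mathcal S^{n-1}\circ\cdots\circ\mathcal S^1\circ\mathcal N^\theta_{A_1\to B_1})(\rho_{R_1A_1}).$$ Then $\mathbf I_F(\theta;\{\omega^\theta_{R_nB_n}\}_\theta)\le n\cdot\mathbf I^{\mathcal A}_F(\theta;\{\mathcal N^\theta_{A\to B}\}_\theta)$.
   Context: Finite-dimensional systems. A generalized Fisher information $\mathbf I_F$ assigns to each $\theta$ and each family $\{\rho^\theta_A\}_\theta$ of density operators an extended real number such that $\mathbf I_F(\theta;\{\rho^\theta_A\}_\theta)\ge\mathbf I_F(\theta;\{\mathcal N_{A\to B}(\rho^\theta_A)\}_\theta)$ for every $\theta$-independent quantum channel $\mathcal N$; it is weakly faithful if it vanishes on $\theta$-independent families. The amortized Fisher information of a channel family is $\mathbf I^{\mathcal A}_F(\theta;\{\mathcal N^\theta_{A\to B}\}_\theta):=\sup_{\{\rho^\theta_{RA}\}_\theta}[\mathbf I_F(\theta;\{\mathcal N^\theta_{A\to B}(\rho^\theta_{RA})\}_\theta)-\mathbf I_F(\theta;\{\rho^\theta_{RA}\}_\theta)]$, supremum over families of states with arbitrary reference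 system $R$. Channels act on the indicated subsystems and as identity elsewhere. *)

(* Defs.v *)
From HB Require Import structures.
From mathcomp Require Import all_boot all_order all_algebra.
From mathcomp Require Import complex mxtens.
From mathcomp Require Import classical_sets boolp reals constructive_ereal ereal.

Set Implicit Arguments.
Unset Strict Implicit.
Unset Printing Implicit Defensive.

Import Order.TTheory GRing.Theory Num.Theory.
Local Open Scope ring_scope.

Section Quantum.
Variable R : realType.
Local Notation C := (R[i]).

Definition adjmx (m n : nat) (A : 'M[C]_(m, n)) : 'M[C]_(n, m) :=
  \matrix_(i, j) (A j i)^*.

Definition psd (d : nat) (A : 'M[C]_d) : Prop :=
  forall v : 'cV[C]_d, 0 <= (adjmx v *m A *m v) 0 0.

Definition density (d : nat) (rho : 'M[C]_d) : Prop :=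
  psd rho /\ \tr rho = 1.

(* id_k (x) Phi acting on the composite system k (x) m, with the reference
   system k first (Kronecker product convention of mxtens). *)
Definition id_tens (k m n : nat) (Phi : 'M[C]_m -> 'M[C]_n)
  (X : 'M[C]_(k * m)) : 'M[C]_(k * n) :=
  \sum_(a < k) \sum_(b < k)
     tensmx (delta_mx a b : 'M[C]_k)
            (Phi (\matrix_(i, j) X (mxtens_index (a, i)) (mxtens_index (b, j)))).
Arguments id_tens k {m n} Phi X.

Definition channel (m n : nat) (Phi : 'M[C]_m -> 'M[C]_n) : Prop :=
  [/\ linear Phi,
      (forall (k : nat) (X : 'M[C]_(k * m)), psd X -> psd (id_tens k Phi X))
    & (forall X : 'M[C]_m, \tr (Phi X) = \tr X)].

Definition info_fun := forall d : nat, R -> (R -> 'M[C]_d) -> \bar R.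

Definition density_family (d : nat) (rho : R -> 'M[C]_d) : Prop :=
  forall t, density (rho t).

Definition gen_fisher (I : info_fun) : Prop :=
  forall (d d' : nat) (N : 'M[C]_d -> 'M[C]_d') (rho : R -> 'M[C]_d) (theta : R),
    channel N -> density_family rho ->
    (I d' theta (fun t => N (rho t)) <= I d theta rho)%E.

Definition weakly_faithful (I : info_fun) : Prop :=
  forall (d : nat) (sigma : 'M[C]_d) (theta : R),
    density sigma -> I d theta (fun _ => sigma) = 0%E.

Definition amortized (I : info_fun) (dA dB : nat)
  (N : R -> 'M[C]_dA -> 'M[C]_dB) (theta : R) : \bar R :=
  ereal_sup [set x | exists (r : nat) (rho : R -> 'M[C]_(r * dA)),
     density_family rho /\
     x = (I (r * dB)%N theta (fun t => id_tens r (N t) (rho t))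
          - I (r * dA)%N theta rho)%E].

(* Output of the n-round sequential strategy: reference dimensions r k,
   input state rho1 on R_1 A_1, interleaved channels S k : R_{k+1}B -> R_{k+2}A
   (0-indexed), unknown channel applied in every round.
   seq_output k theta is the state on R_{k+1} B_{k+1} after k+1 uses. *)
Fixpoint seq_output (dA dB : nat) (N : R -> 'M[C]_dA -> 'M[C]_dB)
  (r : nat -> nat) (rho1 : 'M[C]_(r 0%N * dA))
  (S : forall k : nat, 'M[C]_(r k * dB) -> 'M[C]_(r k.+1 * dA))
  (k : nat) (theta : R) : 'M[C]_(r k * dB) :=
  match k as k0 return 'M[C]_(r k0 * dB) with
  | 0%N => id_tens (r 0%N) (N theta) rho1
  | k'.+1 => id_tens (r k'.+1) (N theta)
               (S k' (seq_output N rho1 S k' theta))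
  end.

End Quantum.

(* Main.v *)
Require Import Defs.
From HB Require Import structures.
From mathcomp Require Import all_boot all_order all_algebra.
From mathcomp Require Import complex mxtens.
From mathcomp Require Import classical_sets boolp reals constructive_ereal ereal.
From mathcomp Require Import lra ring.
Import Order.TTheory GRing.Theory Num.Theory.
Local Open Scope ring_scope.

Section H.
Variable R : realType.
Local Notation C := (R[i]).

Lemma sum_tens (V : nmodType) k m (F : 'I_(k * m) -> V) :
  \sum_p F p = \sum_(a < k) \sum_(i < m) F (mxtens_index (a, i)).
Proof.
rewrite pair_big /= (reindex (@mxtens_index k m)) /=.
  by apply: eq_bigr => -[].
by exists (@mxtens_unindex k m) => ? _; [apply: mxtens_indexK|apply: mxtens_unindexK].
Qed.

Lemma sum_tens1 (V : nmodType) m (F : 'I_(1 * m) -> V) :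
  \sum_p F p = \sum_(i < m) F (mxtens_index (ord0, i)).
Proof. by rewrite sum_tens big_ord1. Qed.

Lemma quadE d (A : 'M[C]_d) (v : 'cV[C]_d) :
  (adjmx v *m A *m v) 0 0 = \sum_j \sum_i (v i 0)^* * A i j * v j 0.
Proof.
rewrite mxE; apply: eq_bigr => j _; rewrite mxE big_distrl /=.
by apply: eq_bigr => i _; rewrite !mxE.
Qed.

Lemma psd_transport m (M : 'M[C]_(1 * m)) (X : 'M[C]_m)
  (H : forall i j, M (mxtens_index (ord0, i)) (mxtens_index (ord0, j)) = X i j) :
  psd M <-> psd X.
Proof.
have key : forall w : 'cV[C]_(1 * m), (adjmx w *m M *m w) 0 0 =
   (adjmx (\col_i w (mxtens_index (ord0, i)) 0) *m X *m
     (\col_i w (mxtens_index (ord0, i)) 0)) 0 0.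
  move=> w; rewrite !quadE sum_tens1; apply: eq_bigr => j _.
  rewrite sum_tens1; apply: eq_bigr => i _; by rewrite !mxE H.
split=> Hp v.
  set w := (\col_(p < 1 * m) v (mxtens_unindex p).2 0).
  suff -> : v = \col_i w (mxtens_index (ord0, i)) 0 by rewrite -(key w).
  by apply/matrixP => i j; rewrite !mxE mxtens_indexK ord1.
by rewrite key.
Qed.

Lemma tr_tens k m (A : 'M[C]_k) (B : 'M[C]_m) : \tr (tensmx A B) = \tr A * \tr B.
Proof.
rewrite /mxtrace sum_tens mulr_suml; apply: eq_bigr => a _.
rewrite mulr_sumr; apply: eq_bigr => i _; by rewrite tensmxE.
Qed.

Lemma tr_delta k (a b : 'I_k) : \tr (delta_mx a b : 'M[C]_k) = (a == b)%:R.
Proof.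
rewrite /mxtrace (bigD1 a) //= big1 ?addr0.
  by rewrite mxE eqxx.
by move=> c /negPf hc; rewrite mxE hc.
Qed.

Lemma tr_id_tens k m n (Phi : 'M[C]_m -> 'M[C]_n) (X : 'M[C]_(k * m)) :
  channel Phi -> \tr (@id_tens R k m n Phi X) = \tr X.
Proof.
case=> _ _ Htr; rewrite /id_tens raddf_sum /=.
rewrite {2}/mxtrace sum_tens; apply: eq_bigr => a _.
rewrite raddf_sum /= (bigD1 a) //= big1 ?addr0.
  rewrite tr_tens tr_delta eqxx mul1r Htr /mxtrace.
  by apply: eq_bigr => i _; rewrite mxE.
by move=> b /negPf hb; rewrite tr_tens tr_delta eq_sym hb mul0r.
Qed.

Lemma chan_psd m n (Phi : 'M[C]_m -> 'M[C]_n) (X : 'M[C]_m) :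
  channel Phi -> psd X -> psd (Phi X).
Proof.
case=> _ Hcp _ HX.
pose M : 'M[C]_(1 * m) := \matrix_(p, q) X (mxtens_unindex p).2 (mxtens_unindex q).2.
have HM : psd M.
  have H0 : forall i j, M (mxtens_index (ord0, i)) (mxtens_index (ord0, j)) = X i j.
    by move=> i j; rewrite mxE !mxtens_indexK.
  exact: (iffRL (@psd_transport m M X H0)).
have := Hcp 1%N M HM.
apply: (iffLR (@psd_transport n _ _ _)) => i j.
rewrite /id_tens !big_ord1 tensmxE mxE eqxx mul1r.
congr (Phi _ i j); apply/matrixP => i' j'; by rewrite !mxE !mxtens_indexK.
Qed.

Lemma chan_density m n (Phi : 'M[C]_m -> 'M[C]_n) (X : 'M[C]_m) :
  channel Phi -> density X -> density (Phi X).
Proof.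
move=> Hc [Hp Ht]; split; first exact: chan_psd.
by case: Hc => _ _ ->.
Qed.

Lemma id_tens_density k m n (Phi : 'M[C]_m -> 'M[C]_n) (X : 'M[C]_(k * m)) :
  channel Phi -> density X -> density (@id_tens R k m n Phi X).
Proof.
move=> Hc [Hp Ht]; split; last by rewrite tr_id_tens.
by case: Hc => _ Hcp _; apply: Hcp.
Qed.

Local Open Scope ereal_scope.
Lemma ehelp (x y a b : \bar R) : x - y <= a -> y <= b ->
  (b = +oo -> a = +oo) -> (b = -oo -> a = -oo) -> x <= a + b.
Proof.
case: x => [x||]; case: y => [y||]; case: a => [a||]; case: b => [b||] //=;
  rewrite ?lee_fin ?leey ?leNye //.
all: try (by move=> _ _ /(_ erefl)); try (by move=> _ _ _ /(_ erefl)).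
by move=> h1 h2 _ _; rewrite -[x](subrK y); exact: lerD.
Qed.

Lemma emulS (k : nat) (A : \bar R) :
  (k.+2%:R)%:E * A = A + (k.+1%:R)%:E * A.
Proof.
case: A => [a||].
- rewrite -EFinM -EFinD; congr EFin.
  by rewrite [in LHS]mulrS mulrDl mul1r.
- by rewrite !gt0_muley ?lte_fin ?ltr0Sn.
- by rewrite !gt0_muleNy ?lte_fin ?ltr0Sn.
Qed.
Lemma emul_side (k : nat) (A : \bar R) :
  ((k.+1%:R)%:E * A = +oo -> A = +oo) /\ ((k.+1%:R)%:E * A = -oo -> A = -oo).
Proof.
case: A => [a||]; rewrite ?gt0_muley ?gt0_muleNy ?lte_fin ?ltr0Sn // -EFinM //.
Qed.
End H.

Theorem mainTheorem5 (R : realType) (I : info_fun R)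
  (HI : gen_fisher I) (Hwf : weakly_faithful I)
  (dA dB : nat) (N : R -> 'M[R[i]]_dA -> 'M[R[i]]_dB)
  (HN : forall t, channel (N t))
  (n : nat) (Hn : (0 < n)%N)
  (r : nat -> nat) (rho1 : 'M[R[i]]_(r 0%N * dA)) (Hrho1 : density rho1)
  (S : forall k : nat, 'M[R[i]]_(r k * dB) -> 'M[R[i]]_(r k.+1 * dA))
  (HS : forall k : nat, (k < n.-1)%N -> channel (S k))
  (theta : R) :
  (I (r n.-1 * dB)%N theta (seq_output N rho1 S n.-1)
     <= (n%:R)%:E * amortized I N theta)%E.
Proof.
set A := amortized I N theta.
have HA : forall (rr : nat) (rho : R -> 'M[R[i]]_(rr * dA)), density_family rho ->
  (I (rr * dB)%N theta (fun t => id_tens (N t) (rho t)) - I (rr * dA)%N theta rho <= A)%E.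
  by move=> rr rho Hr; apply: ereal_sup_ubound; exists rr, rho.
have key : forall k, (k < n)%N -> density_family (seq_output N rho1 S k) /\
   (I (r k * dB)%N theta (seq_output N rho1 S k) <= (k.+1%:R)%:E * A)%E.
  elim=> [|k IH] Hk.
    split; first by move=> t; apply: id_tens_density.
    have h := HA (r 0%N) (fun _ => rho1) (fun _ => Hrho1).
    by rewrite Hwf // sube0 in h; rewrite mul1e.
  have [Hd Hle] := IH (ltnW Hk).
  have HSk : channel (S k) by apply: HS; rewrite -ltnS prednK.
  have Hsig : density_family (fun t => S k (seq_output N rho1 S k t)).
    by move=> t; apply: chan_density.
  split; first by move=> t; apply: id_tens_density.
  have [s1 s2] := emul_side R k A.
  rewrite emulS; apply: (ehelp _ _ _ _ _ (HA _ _ Hsig)) => //.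
  by apply: le_trans Hle; apply: HI.
have := key n.-1; rewrite prednK // => /(_ (leqnn n)) [_ H].
exact: H.
Qed.
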